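(* For positive integers $k\le n$: $\theta_k(\ell_1,\ell_2)\le \sqrt{n}^{\,k}$; $\theta_k(\ell_1,\ell_\infty)\le n^k$; $\theta_k(\ell_2,\ell_1)\le (n/k)^{k/2}$; $\theta_k(\ell_2,\ell_\infty)\le (n/k)^{k/2}\sqrt{n}^{\,k}$; $\theta_k(\ell_\infty,\ell_1)\le \binom nk (k+1)^{(k-1)/2}$ if $k<n$ and $\le \sqrt n^{\,n}$ if $k=n$; $\theta_k(\ell_\infty,\ell_2)\le \binom nk (k+1)^{(k-1)/2}$ if $k<n$ and $\le \sqrt n^{\,n}$ if $k=n$.
   Context: $C_k(B)$ is the $k$th compound of $B\in\mathbb{C}^{n\times n}$ (the $\binom nk\times\binom nk$ matrix of $k\times k$ minors $\det B(\alpha|\beta)$). $\theta_k(\mu,\nu)=\max\{\mu(C_k(B)): B\in\mathbb{C}^{n\times n},\ \nu(\mathrm{col}_i(B))=1,\ i=1,\ldots,n\}$, with $\mathrm{col}_i(B)$ the $i$th column. In $\theta_k(\ell_p,\ell_q)$, the first argument $\ell_p$ denotes the matrix operator norm induced by the vector $\ell_p$ norm (applied to $C_k(B)$), and the second denotes the vector $\ell_q$ norm (applied to columns of $B$). *)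

(* Defs.v *)
From HB Require Import structures.
From mathcomp Require Import all_boot all_order all_algebra.
From mathcomp Require Import classical_sets reals.
From mathcomp Require Import complex.
Set Implicit Arguments.
Unset Strict Implicit.
Unset Printing Implicit Defensive.
Import Order.TTheory GRing.Theory Num.Theory.
Local Open Scope ring_scope.
Local Open Scope classical_set_scope.

Definition cabs {R : realType} (z : R[i]) : R :=
  let: Complex a b := z in Num.sqrt (a ^+ 2 + b ^+ 2).

Inductive lp := l1 | l2 | linf.

Definition vnorm {R : realType} (p : lp) {n : nat} (x : 'cV[R[i]]_n) : R :=
  match p with
  | l1 => \sum_(i < n) cabs (x i 0)
  | l2 => Num.sqrt (\sum_(i < n) cabs (x i 0) ^+ 2)
  | linf => \big[Num.max/0]_(i < n) cabs (x i 0)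
  end.

Definition opnorm {R : realType} (p : lp) {m n : nat} (A : 'M[R[i]]_(m, n)) : R :=
  sup [set vnorm p (A *m x) | x in [set x : 'cV[R[i]]_n | vnorm p x = 1]].

Definition ksub (n k : nat) := {S : {set 'I_n} | #|S| == k}.

(* increasing enumeration 'I_k -> 'I_n of a k-subset *)
Definition ksub_idx {n k : nat} (a : ksub n k) (i : 'I_k) : 'I_n :=
  @enum_val _ (mem (val a)) (cast_ord (esym (eqP (valP a))) i).

(* k-th compound matrix: the matrix of k x k minors det B(alpha|beta),
   rows and columns indexed by the k-subsets of {0..n-1} (listed in the
   fixed enumeration order of the finite type ksub n k). *)
Definition compound {R : realType} (k : nat) {n : nat} (B : 'M[R[i]]_n)
  : 'M[R[i]]_#|{: ksub n k}| :=
  \matrix_(i, j) \det (mxsub (ksub_idx (enum_val i)) (ksub_idx (enum_val j)) B).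

Definition theta {R : realType} (n k : nat) (mu nu : lp) : R :=
  sup [set opnorm mu (compound k B) |
       B in [set B : 'M[R[i]]_n | forall i : 'I_n, vnorm nu (col i B) = 1]].

(* Main.v *)
Require Import Defs.
From HB Require Import structures.
From mathcomp Require Import all_boot all_order all_algebra.
From mathcomp Require Import classical_sets reals.
From mathcomp Require Import complex.
From mathcomp Require Import fingroup perm sesquilinear spectral.
Import Order.TTheory GRing.Theory Num.Theory.
Local Open Scope ring_scope.
Set Implicit Arguments.
Unset Strict Implicit.
Unset Printing Implicit Defensive.

Section Comb.
Variables n k : nat.

Lemma ksub_idxP (a : ksub n k) i : ksub_idx a i \in val a.
Proof. exact: enum_valP. Qed.

Lemma ksub_idx_inj (a : ksub n k) : injective (ksub_idx a).
Proof. by move=> i j /enum_val_inj /cast_ord_inj. Qed.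

Lemma ksub_idx_im (a : ksub n k) : [set ksub_idx a i | i : 'I_k] = val a.
Proof.
apply/eqP; rewrite eqEcard; apply/andP; split.
  by apply/fintype.subsetP => x /imsetP [i _ ->]; exact: ksub_idxP.
by rewrite card_imset; [rewrite card_ord (eqP (valP a)) | exact: ksub_idx_inj].
Qed.

Lemma card_ksub : #|{: ksub n k}| = 'C(n, k).
Proof.
rewrite card_sig; have := card_draws 'I_n k; rewrite card_ord => <-.
by apply: fintype.eq_card => A; rewrite !inE.
Qed.

Definition gcomp (p : ksub n k * {perm 'I_k}) : {ffun 'I_k -> 'I_n} :=
  [ffun i => ksub_idx p.1 (p.2 i)].

Lemma gcomp_im p : [set gcomp p i | i : 'I_k] = val p.1.
Proof.
rewrite -ksub_idx_im; apply/setP => x; apply/imsetP/imsetP => [[i _ ->]|[i _ ->]].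
  by exists (p.2 i) => //; rewrite ffunE.
by exists ((p.2)^-1 i)%g => //; rewrite ffunE permKV.
Qed.

Lemma gcomp_inj : injective gcomp.
Proof.
move=> [a s] [b t] E.
have Eab : a = b by apply: val_inj; rewrite -(gcomp_im (a, s)) -(gcomp_im (b, t)) E.
subst b; congr pair; apply/permP => i.
have := congr1 (fun f : {ffun _ -> _} => f i) E; rewrite !ffunE /=.
exact: ksub_idx_inj.
Qed.

Lemma gcomp_image : [set gcomp p | p : ksub n k * {perm 'I_k}] = [set f : {ffun 'I_k -> 'I_n} | injectiveb f].
Proof.
apply/eqP; rewrite eqEcard; apply/andP; split.
  apply/fintype.subsetP => f /imsetP [p _ ->]; rewrite inE; apply/injectiveP => i j.
  by rewrite !ffunE => /ksub_idx_inj /perm_inj.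
rewrite card_inj_ffuns card_imset; last exact: gcomp_inj.
by rewrite card_prod card_ksub perm.card_Sn !card_ord bin_ffact.
Qed.
End Comb.
Section CB.
Variable F : comNzRingType.
Variables n k : nat.

Lemma det_rowsub_gcomp (Y : 'M[F]_(n, k)) (p : ksub n k * {perm 'I_k}) :
  \det (rowsub (gcomp p) Y) = (-1) ^+ p.2 * \det (rowsub (ksub_idx p.1) Y).
Proof.
have -> : rowsub (gcomp p) Y = row_perm p.2 (rowsub (ksub_idx p.1) Y).
  by apply/matrixP => i j; rewrite !mxE ffunE.
by rewrite row_permE det_mulmx det_perm.
Qed.

Lemma cauchy_binet (X : 'M[F]_(k, n)) (Y : 'M[F]_(n, k)) :
  \det (X *m Y) = \sum_(g : ksub n k)
     \det (colsub (ksub_idx g) X) * \det (rowsub (ksub_idx g) Y).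
Proof.
pose G (f : {ffun 'I_k -> 'I_n}) := (\prod_i X i (f i)) * \det (rowsub f Y).
have -> : \det (X *m Y) = \sum_f G f.
  rewrite /determinant.
  under eq_bigr => s _.
    under eq_bigr => i _ do rewrite mxE.
    rewrite bigA_distr_bigA /= mulr_sumr.
    over.
  rewrite exchange_big /=; apply: eq_bigr => f _.
  rewrite /G /determinant mulr_sumr; apply: eq_bigr => s _.
  by rewrite mulrCA big_split /=; congr (_ * (_ * _)); apply: eq_bigr => i _; rewrite mxE.
rewrite (bigID (fun f : {ffun 'I_k -> 'I_n} => injectiveb f)) /=.
rewrite [X in _ + X]big1 ?addr0; last first.
  move=> f /injectivePn [i [j neq_ij Eij]].
  rewrite /G (@determinant_alternate _ _ _ i j) ?mulr0 //.
  by move=> l; rewrite !mxE Eij.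
have -> : \sum_(f : {ffun 'I_k -> 'I_n} | injectiveb f) G f = \sum_(f in [set f : {ffun 'I_k -> 'I_n} | injectiveb f]) G f.
  by apply: eq_bigl => f; rewrite inE.
rewrite -gcomp_image big_imset /=; last by move=> p q _ _; exact: gcomp_inj.
rewrite -(pair_bigA _ (fun a s => G (gcomp (a, s)))) /=.
apply: eq_bigr => a _.
rewrite [X in X * _]/determinant mulr_suml. apply: eq_big => // s _.
rewrite /G det_rowsub_gcomp /= /determinant.
rewrite mulrA [_ * (-1) ^+ _]mulrC; congr (_ * _ * _).
by apply: eq_bigr => i _; rewrite !mxE ffunE.
Qed.
End CB.
Section Basics.
Variable R : realType.
Local Notation C := (R[i]).
Local Notation RC x := ((x%:C)%C : C).

Lemma normC_cabs (z : C) : `|z| = RC (cabs z).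
Proof. by case: z => a b; rewrite normc_def. Qed.

Lemma cabs_ge0 (z : C) : 0 <= cabs z.
Proof. by rewrite -ler0c -normC_cabs normr_ge0. Qed.

Lemma cabsD (x y : C) : cabs (x + y) <= cabs x + cabs y.
Proof. by rewrite -lecR rmorphD -!normC_cabs ler_normD. Qed.

Lemma cabsM (x y : C) : cabs (x * y) = cabs x * cabs y.
Proof. by apply: complexI; rewrite rmorphM -!normC_cabs normrM. Qed.

Lemma cabs_sum (I : finType) (F : I -> C) : cabs (\sum_i F i) <= \sum_i cabs (F i).
Proof.
rewrite -lecR rmorph_sum -normC_cabs.
apply: le_trans (ler_norm_sum _ _ _) _; rewrite le_eqVlt; apply/orP; left; apply/eqP; apply: eq_bigr => i _; exact: normC_cabs.
Qed.
End Basics.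
Section Compound.
Variable R : realType.
Local Notation C := (R[i]).
Variables n k : nat.
Local Notation N := #|{: ksub n k}|.
Local Notation cp := (@compound R k n).
Local Open Scope sesquilinear_scope.

Lemma compoundE (B : 'M[C]_n) i j :
  cp B i j = \det (mxsub (ksub_idx (enum_val i)) (ksub_idx (enum_val j)) B).
Proof. by rewrite mxE. Qed.

Lemma sum_enum_val (h : ksub n k -> C) :
  \sum_(l < N) h (enum_val l) = \sum_g h g.
Proof.
by rewrite [RHS](reindex (@enum_val _ (mem {: ksub n k}))) //; exact: onW_bij (enum_val_bij _).
Qed.

Lemma compound_mul (X Y : 'M[C]_n) : cp (X *m Y) = cp X *m cp Y.
Proof.
apply/matrixP => i j; rewrite !mxE.
set a := ksub_idx (enum_val i); set b := ksub_idx (enum_val j).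
have -> : mxsub a b (X *m Y) = rowsub a X *m colsub b Y.
  by apply/matrixP => r c; rewrite !mxE; apply: eq_bigr => l _; rewrite !mxE.
rewrite cauchy_binet -sum_enum_val; apply: eq_bigr => l _; rewrite !mxE.
by rewrite /a /b; congr (_ * _); congr (\det _); apply/matrixP => r c; rewrite !mxE.
Qed.

Lemma compound_adj (B : 'M[C]_n) : cp (B ^t* ) = (cp B) ^t*.
Proof.
apply/matrixP => i j; rewrite !mxE.
have -> : mxsub (ksub_idx (enum_val i)) (ksub_idx (enum_val j)) (B ^t* ) =
  (mxsub (ksub_idx (enum_val j)) (ksub_idx (enum_val i)) B) ^t*.
  by apply/matrixP => r c; rewrite !mxE.
by rewrite det_map_mx det_tr.
Qed.

Lemma ksub_neq (a b : ksub n k) : a != b -> exists t, ksub_idx a t \notin val b.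
Proof.
move=> neq; apply/existsP; apply: contraR neq; rewrite negb_exists => /forallP H.
apply/eqP/val_inj/eqP; rewrite eqEcard (eqP (valP a)) (eqP (valP b)) leqnn andbT.
apply/fintype.subsetP => x; rewrite -ksub_idx_im => /imsetP [t _ ->].
by have := H t; rewrite negbK.
Qed.

Lemma compound_diag (d : 'rV[C]_n) :
  cp (diag_mx d) = diag_mx (\row_i \prod_t d 0 (ksub_idx (enum_val i) t)).
Proof.
apply/matrixP => i j; rewrite !mxE.
have [<-|neq] := eqVneq i j.
  rewrite ?eqxx mulr1n.
  have -> : mxsub (ksub_idx (enum_val i)) (ksub_idx (enum_val i)) (diag_mx d)
      = diag_mx (\row_t d 0 (ksub_idx (enum_val i) t)).
    apply/matrixP => r c; rewrite !mxE (inj_eq (@ksub_idx_inj _ _ _)).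
    by case: eqVneq => [->|]; rewrite ?mulr1n ?mulr0n.
  by rewrite det_diag; apply: eq_bigr => t _; rewrite mxE.
rewrite /= mulr0n.
have [t Ht] := @ksub_neq (enum_val i) (enum_val j)
   (contra (fun E => introT eqP (enum_val_inj (eqP E))) neq).
rewrite (expand_det_row _ t) big1 // => c _; rewrite !mxE.
case: eqVneq => [E|]; last by rewrite mulr0n mul0r.
by move: Ht; rewrite E ksub_idxP.
Qed.

Lemma compound1 : cp 1%:M = 1%:M.
Proof.
rewrite -diag_const_mx compound_diag -diag_const_mx; congr diag_mx.
by apply/matrixP => r c; rewrite !mxE big1 // => t _; rewrite mxE.
Qed.
End Compound.
Section Gram.
Variable R : realType.
Local Notation C := (R[i]).
Local Notation RC x := ((x%:C)%C : C).
Local Open Scope sesquilinear_scope.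

Lemma conj_mul_cabs (z : C) : Num.conj z * z = RC (cabs z ^+ 2).
Proof.
case: z => a b; rewrite /cabs sqr_sqrtr ?addr_ge0 ?sqr_ge0 //.
change (Num.conj (a +i* b)%C) with ((a -i* b)%C).
apply/eqP; rewrite eq_complex /=; apply/andP; split; apply/eqP.
  by rewrite !expr2 mulNr opprK.
by rewrite mulNr mulrC subrr.
Qed.

Lemma adj_mul m n p (A : 'M[C]_(m, n)) (B : 'M[C]_(n, p)) :
  (A *m B) ^t* = B ^t* *m A ^t*.
Proof. by rewrite trmx_mul map_mxM. Qed.

Lemma unitary_adjK n (P : 'M[C]_n) : P \is unitarymx -> P ^t* *m P = 1%:M.
Proof.
by rewrite -trmxC_unitary => /unitarymxP; rewrite trmxCK.
Qed.

Lemma gram_spectral m n (B : 'M[C]_(m, n)) : exists (P : 'M[C]_n) (d : 'rV[C]_n),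
  [/\ P \is unitarymx, B ^t* *m B = P ^t* *m diag_mx d *m P,
      forall j, 0 <= d 0 j &
      \sum_j d 0 j = \sum_j \sum_r RC (cabs (B r j) ^+ 2)].
Proof.
set G := B ^t* *m B.
have GG : G ^t* = G by rewrite /G adj_mul trmxCK.
have Gn : G \is normalmx by apply/normalmxP; rewrite GG.
have := orthomx_spectralP Gn; set P := spectralmx G; set d := spectral_diag G.
have Pu : P \is unitarymx by exact: spectral_unitarymx.
rewrite invmx_unitary // => EG.
have ED : P *m G *m P ^t* = diag_mx d.
  by rewrite EG !mulmxA (unitarymxP Pu) mul1mx -mulmxA (unitarymxP Pu) mulmx1.
exists P, d; split => //.
- move=> j; have := congr1 (fun M : 'M[C]_n => M j j) ED; rewrite /= [diag_mx d j j]mxE eqxx mulr1n => <-.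
  have -> : P *m G *m P ^t* = (B *m P ^t*) ^t* *m (B *m P ^t*).
    by rewrite adj_mul trmxCK /G !mulmxA.
  by rewrite mxE sumr_ge0 // => r _; rewrite !mxE conj_mul_cabs ler0c exprn_ge0 // cabs_ge0.
- have -> : \sum_j d 0 j = \tr (diag_mx d) by rewrite /mxtrace; apply: eq_bigr => j _; rewrite mxE ?eqxx mulr1n.
  rewrite -ED mxtrace_mulC mulmxA unitary_adjK // mul1mx /mxtrace.
  by apply: eq_bigr => j _; rewrite mxE; apply: eq_bigr => r _; rewrite !mxE conj_mul_cabs.
Qed.
End Gram.
Section RealAux.
Variable R : realType.

Lemma sum_inj_le (I J : finType) (f : I -> J) (h : J -> R) :
  injective f -> (forall j, 0 <= h j) -> \sum_i h (f i) <= \sum_j h j.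
Proof.
move=> finj h0.
rewrite -(big_imset (h := f) (A := predT) (fun j => h j) (in2W finj)) /=.
rewrite [leRHS](bigID (mem [set f x | x in predT])) /= lerDl sumr_ge0 //.
Qed.

Lemma amgm k (E : 'I_k -> R) : (0 < k)%N -> (forall t, 0 <= E t) ->
  \prod_t E t <= ((\sum_t E t) / k%:R) ^+ k.
Proof.
move=> k0 E0.
have := (leif_AGM (A := predT) (E := E) (fun i _ => E0 i)).1.
by rewrite cardE /= size_enum_ord.
Qed.
End RealAux.
Section L2.
Variable R : realType.
Local Notation C := (R[i]).
Local Notation RC x := ((x%:C)%C : C).
Local Open Scope sesquilinear_scope.

Lemma RC_sum (I : finType) (F : I -> R) : RC (\sum_i F i) = \sum_i RC (F i).
Proof. exact: rmorph_sum. Qed.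
Lemma RC_prod (I : finType) (F : I -> R) : RC (\prod_i F i) = \prod_i RC (F i).
Proof. exact: rmorph_prod. Qed.
Lemma RC_mul (a b : R) : RC (a * b) = RC a * RC b.
Proof. exact: rmorphM. Qed.

Lemma nrm2_adj p (v : 'cV[C]_p) : (v ^t* *m v) 0 0 = RC (\sum_i cabs (v i 0) ^+ 2).
Proof.
rewrite mxE RC_sum; apply: eq_bigr => i _; rewrite !mxE.
exact: conj_mul_cabs.
Qed.

Lemma ge0_RC (z : C) : 0 <= z -> z = RC (complex.Re z).
Proof. by move=> /ger0_Im; case: z => a b /= ->. Qed.

Lemma quad_diag p (y : 'cV[C]_p) (e : 'rV[C]_p) (M : C) :
  (forall l, 0 <= e 0 l <= M) ->
  (y ^t* *m diag_mx e *m y) 0 0 <= M * (y ^t* *m y) 0 0.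
Proof.
move=> He; rewrite mul_mx_diag !mxE mulr_sumr; apply: ler_sum => l _.
rewrite !mxE mulrAC [M * _]mulrC; apply: ler_wpM2l.
  by rewrite conj_mul_cabs ler0c exprn_ge0 // cabs_ge0.
by case/andP: (He l).
Qed.

Lemma compound_l2 n k (B : 'M[C]_n) (T : R) (x : 'cV[C]_#|{: ksub n k}|) :
  (0 < k)%N -> \sum_j \sum_r cabs (B r j) ^+ 2 <= T ->
  \sum_i cabs ((compound k B *m x) i 0) ^+ 2 <=
    (T / k%:R) ^+ k * \sum_i cabs (x i 0) ^+ 2.
Proof.
move=> k0 HT.
have [P [d [Pu EG d0 sd]]] := gram_spectral B.
pose dr j := complex.Re (d 0 j).
have Edr j : d 0 j = RC (dr j) by exact: ge0_RC.
have dr0 j : 0 <= dr j by rewrite -ler0c -Edr.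
have sdr : \sum_j dr j <= T.
  apply: le_trans HT; rewrite -lecR RC_sum; under eq_bigr do rewrite -Edr.
  by rewrite sd RC_sum; under [X in _ <= X]eq_bigr do rewrite RC_sum.
rewrite -lecR RC_mul -!nrm2_adj.
set A := compound k B.
have EA : A ^t* *m A = compound k P ^t* *m compound k (diag_mx d) *m compound k P.
  by rewrite /A -[in LHS]compound_adj -[LHS]compound_mul EG !compound_mul compound_adj.
set y := compound k P *m x.
have -> : (A *m x) ^t* *m (A *m x) = y ^t* *m compound k (diag_mx d) *m y.
  by rewrite /y !adj_mul !mulmxA -(mulmxA _ A) -(mulmxA _ (A ^t* )) (mulmxA (A^t*)) EA !mulmxA.
have -> : x ^t* *m x = y ^t* *m y.
  rewrite /y adj_mul mulmxA -(mulmxA _ _ (compound k P)) -compound_adj -compound_mul.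
  by rewrite unitary_adjK // compound1 mulmx1.
rewrite compound_diag; apply: quad_diag => l; rewrite mxE.
have -> : \prod_t d 0 (ksub_idx (enum_val l) t) = RC (\prod_t dr (ksub_idx (enum_val l) t)).
  by rewrite RC_prod; apply: eq_bigr => t _; rewrite Edr.
rewrite ler0c lecR prodr_ge0 //=.
apply: le_trans (amgm (E := fun t => dr (ksub_idx (enum_val l) t)) k0 (fun t => dr0 _)) _.
apply: lerXn2r.
- by rewrite nnegrE divr_ge0 ?sumr_ge0 ?ler0n.
- by rewrite nnegrE divr_ge0 ?ler0n //; apply: le_trans sdr; exact: sumr_ge0.
apply: ler_wpM2r; first by rewrite invr_ge0 ler0n.
apply: le_trans sdr; apply: (sum_inj_le (f := ksub_idx (enum_val l))) => //; exact: ksub_idx_inj.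
Qed.
End L2.
Section Hadamard.
Variable R : realType.
Local Notation C := (R[i]).
Local Notation RC x := ((x%:C)%C : C).
Local Open Scope sesquilinear_scope.

Lemma hadamard_lite k (M : 'M[C]_k) (T : R) : (0 < k)%N ->
  \sum_j \sum_r cabs (M r j) ^+ 2 <= T ->
  cabs (\det M) ^+ 2 <= (T / k%:R) ^+ k.
Proof.
move=> k0 HT.
have [P [d [Pu EG d0 sd]]] := gram_spectral M.
pose dr j := complex.Re (d 0 j).
have Edr j : d 0 j = RC (dr j) by exact: ge0_RC.
have dr0 j : 0 <= dr j by rewrite -ler0c -Edr.
have sdr : \sum_j dr j <= T.
  apply: le_trans HT; rewrite -lecR RC_sum; under eq_bigr do rewrite -Edr.
  by rewrite sd RC_sum; under [X in _ <= X]eq_bigr do rewrite RC_sum.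
have E1 : RC (cabs (\det M) ^+ 2) = RC (\prod_j dr j).
  rewrite -conj_mul_cabs.
  have -> : Num.conj (\det M) = \det (M ^t* ) by rewrite det_map_mx det_tr.
  rewrite -det_mulmx EG !det_mulmx mulrAC -det_mulmx unitary_adjK // det1 mul1r.
  by rewrite det_diag RC_prod; apply: eq_bigr => j _; rewrite Edr.
have -> : cabs (\det M) ^+ 2 = \prod_j dr j by apply: complexI; exact: E1.
apply: le_trans (amgm (E := dr) k0 dr0) _.
apply: lerXn2r.
- by rewrite nnegrE divr_ge0 ?sumr_ge0 ?ler0n.
- by rewrite nnegrE divr_ge0 ?ler0n //; apply: le_trans sdr; exact: sumr_ge0.
- by apply: ler_wpM2r; first by rewrite invr_ge0 ler0n.
Qed.
End Hadamard.
Section Perm.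
Variable R : realType.
Local Notation C := (R[i]).
Local Notation RC x := ((x%:C)%C : C).

Lemma eqle (x y : R) : x = y -> x <= y. Proof. by move->. Qed.

Lemma cabs_prod (I : finType) (F : I -> C) : cabs (\prod_i F i) = \prod_i cabs (F i).
Proof.
apply: complexI; rewrite -normC_cabs normr_prod RC_prod.
by apply: eq_bigr => i _; rewrite normC_cabs.
Qed.

Lemma cabs_sign (b : bool) (z : C) : cabs ((-1) ^+ b * z) = cabs z.
Proof.
rewrite cabsM; have -> : cabs ((-1) ^+ b : C) = 1.
  by apply: complexI; rewrite -normC_cabs normrX normrN1 expr1n.
by rewrite mul1r.
Qed.

Lemma cabs_det_le k (M : 'M[C]_k) :
  cabs (\det M) <= \sum_(s : 'S_k) \prod_t cabs (M (s t) t).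
Proof.
rewrite -det_tr /determinant; apply: le_trans; first exact: cabs_sum.
apply: ler_sum => s _; rewrite cabs_sign cabs_prod.
by apply: eqle; apply: eq_bigr => t _; rewrite mxE.
Qed.

Lemma colsum_compound n k (B : 'M[C]_n) (b : ksub n k) :
  \sum_(a : ksub n k) cabs (\det (mxsub (ksub_idx a) (ksub_idx b) B))
    <= \prod_t \sum_r cabs (B r (ksub_idx b t)).
Proof.
pose H (f : {ffun 'I_k -> 'I_n}) := \prod_t cabs (B (f t) (ksub_idx b t)).
apply: le_trans (_ : \sum_(p : ksub n k * {perm 'I_k}) H (gcomp p) <= _).
  rewrite -(pair_bigA _ (fun a s => H (gcomp (a, s)))) /=.
  apply: ler_sum => a _; apply: le_trans (cabs_det_le _) _.
  by apply: eqle; apply: eq_bigr => s _; apply: eq_bigr => t _; rewrite !mxE ffunE.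
rewrite bigA_distr_bigA /=.
apply: (sum_inj_le (f := gcomp (n:=n) (k:=k)) (h := H)); first exact: gcomp_inj.
by move=> f; apply: prodr_ge0 => t _; exact: cabs_ge0.
Qed.
End Perm.
Section Norms.
Variable R : realType.
Local Notation C := (R[i]).

Lemma cs_lite n (a : 'I_n -> R) : (\sum_r a r) ^+ 2 <= n%:R * \sum_r a r ^+ 2.
Proof.
have H : (\sum_r a r) ^+ 2 *+ 2 <= (n%:R * \sum_r a r ^+ 2) *+ 2.
  rewrite [X in X *+ 2 <= _]expr2 mulr_suml -[X in X <= _]sumrMnl.
  apply: le_trans (_ : \sum_r \sum_s (a r ^+ 2 + a s ^+ 2) <= _).
    apply: ler_sum => r _; rewrite mulr_sumr -sumrMnl; apply: ler_sum => s _.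
    exact: (leif_mean_square_scaled (a r) (a s)).1.
  rewrite mulr2n; under eq_bigr do rewrite big_split /= sumr_const card_ord.
  by rewrite big_split /= sumrMnl sumr_const card_ord !mulr_natl.
by rewrite lerMn2r in H.
Qed.

Lemma sum_cabs_le1 n (a : 'I_n -> R) : (forall r, 0 <= a r) -> \sum_r a r = 1 -> \sum_r a r ^+ 2 <= 1.
Proof.
move=> a0 s1; rewrite -[leRHS]s1; apply: ler_sum => r _.
have ar1 : a r <= 1 by rewrite -s1 (bigD1 r) //= lerDl sumr_ge0.
by rewrite expr2 ler_piMr.
Qed.

Lemma sqrtrX (x : R) k : 0 <= x -> Num.sqrt (x ^+ k) = Num.sqrt x ^+ k.
Proof.
move=> x0; elim: k => [|k IH]; first by rewrite !expr0 sqrtr1.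
by rewrite !exprS sqrtrM // IH.
Qed.
End Norms.
Section OpNorm.
Variable R : realType.
Local Notation C := (R[i]).
Local Open Scope classical_set_scope.

Lemma sup_le_c (E : set R) (c : R) : 0 <= c -> (forall y, E y -> y <= c) -> sup E <= c.
Proof.
move=> c0 HE; have [[y Ey]|nE] := boolp.pselect (exists y, E y).
  by apply: ge_sup => //; exists y.
have -> : E = set0.
  by apply/seteqP; split => y Ey //; exfalso; apply: nE; exists y.
by rewrite sup0.
Qed.

Lemma opnorm_le (p : lp) m (A : 'M[C]_m) (c : R) : 0 <= c ->
  (forall x, vnorm p (A *m x) <= c * vnorm p x) -> opnorm p A <= c.
Proof.
move=> c0 H; apply: sup_le_c => // y [x /= x1 <-].
by apply: le_trans (H x) _; rewrite x1 mulr1.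
Qed.

Lemma theta_le n k (mu nu : lp) (c : R) : 0 <= c ->
  (forall B : 'M[C]_n, (forall i, vnorm nu (col i B) = 1) ->
     opnorm mu (compound k B) <= c) -> theta n k mu nu <= c.
Proof. by move=> c0 H; apply: sup_le_c => // y [B /= HB <-]; exact: H. Qed.

Lemma vnorm_l1 m (A : 'M[C]_m) (c : R) (x : 'cV[C]_m) :
  (forall j, \sum_i cabs (A i j) <= c) -> vnorm l1 (A *m x) <= c * vnorm l1 x.
Proof.
move=> H; rewrite /= mulr_sumr.
apply: le_trans (_ : \sum_i \sum_j cabs (A i j) * cabs (x j 0) <= _).
  apply: ler_sum => i _; rewrite mxE; apply: le_trans; first exact: cabs_sum.
  by apply: eqle; apply: eq_bigr => j _; rewrite cabsM.
rewrite exchange_big /=; apply: ler_sum => j _; rewrite -mulr_suml.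
by apply: ler_wpM2r; [exact: cabs_ge0 | exact: H].
Qed.

Lemma bigmax_ge0 m (F : 'I_m -> R) : (forall i, 0 <= F i) -> 0 <= \big[Num.max/0]_(i < m) F i.
Proof. by move=> F0; elim/big_ind: _ => // a b a0 b0; rewrite le_max a0. Qed.

Lemma vnorm_linf m (A : 'M[C]_m) (c : R) (x : 'cV[C]_m) : 0 <= c ->
  (forall i, \sum_j cabs (A i j) <= c) -> vnorm linf (A *m x) <= c * vnorm linf x.
Proof.
move=> c0 H; rewrite /=; apply: bigmax_le; first by rewrite mulr_ge0 // bigmax_ge0 // => l; exact: cabs_ge0.
move=> i _; rewrite mxE; apply: le_trans; first exact: cabs_sum.
apply: le_trans (_ : \sum_j cabs (A i j) * \big[Num.max/0]_(l < m) cabs (x l 0) <= _).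
  apply: ler_sum => j _; rewrite cabsM; apply: ler_wpM2l; first exact: cabs_ge0.
  exact: (le_bigmax _ (fun l => cabs (x l 0))).
by rewrite -mulr_suml; apply: ler_wpM2r; [apply: bigmax_ge0 => l; exact: cabs_ge0 | exact: H].
Qed.

Lemma vnorm_l2 n k (B : 'M[C]_n) (T : R) (x : 'cV[C]_#|{: ksub n k}|) :
  (0 < k)%N -> \sum_j \sum_r cabs (B r j) ^+ 2 <= T ->
  vnorm l2 (compound k B *m x) <= Num.sqrt ((T / k%:R) ^+ k) * vnorm l2 x.
Proof.
move=> k0 HT; rewrite /= -sqrtrM; last first.
  rewrite exprn_ge0 // divr_ge0 ?ler0n //; apply: le_trans HT.
  by apply: sumr_ge0 => j _; apply: sumr_ge0 => r _; rewrite exprn_ge0 // cabs_ge0.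
by apply: ler_wsqrtr; exact: compound_l2.
Qed.
End OpNorm.
Section Main.
Variable R : realType.
Local Notation C := (R[i]).

Lemma prod_const_ord k (x : R) : \prod_(t < k) x = x ^+ k.
Proof. by rewrite prodr_const card_ord. Qed.

Lemma sum_enum_valR n k (h : ksub n k -> R) :
  \sum_(l < #|{: ksub n k}|) h (enum_val l) = \sum_g h g.
Proof.
by rewrite [RHS](reindex (@enum_val _ (mem {: ksub n k}))) //; exact: onW_bij (enum_val_bij _).
Qed.

Lemma colsum_cp n k (B : 'M[C]_n) j :
  \sum_i cabs (compound k B i j) <= \prod_t \sum_r cabs (B r (ksub_idx (enum_val j) t)).
Proof.
apply: le_trans (colsum_compound B (enum_val j)).
rewrite -sum_enum_valR; apply: eqle; apply: eq_bigr => i _; by rewrite mxE.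
Qed.

Lemma entry_cp n k (B : 'M[C]_n) i j :
  cabs (compound k B i j) <= \prod_t \sum_r cabs (B r (ksub_idx (enum_val j) t)).
Proof.
apply: le_trans (colsum_cp B j).
by rewrite (bigD1 i) //= lerDl sumr_ge0 // => l _; exact: cabs_ge0.
Qed.

Lemma entry_cp_l2 n k (B : 'M[C]_n) i j : (0 < k)%N ->
  (forall j, \sum_r cabs (B r j) ^+ 2 = 1) -> cabs (compound k B i j) <= 1.
Proof.
move=> k0 H; rewrite mxE.
set M := mxsub _ _ B.
have HM : \sum_t \sum_s cabs (M s t) ^+ 2 <= k%:R.
  rewrite -[k in k%:R](card_ord k) -sumr_const; apply: ler_sum => t _.
  rewrite -(H (ksub_idx (enum_val j) t)); under eq_bigr do rewrite mxE.
  apply: (sum_inj_le (f := ksub_idx (enum_val i)) (h := fun r => cabs (B r (ksub_idx (enum_val j) t)) ^+ 2)).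
    exact: ksub_idx_inj.
  by move=> r; rewrite exprn_ge0 // cabs_ge0.
have := hadamard_lite k0 HM; rewrite divff ?pnatr_eq0 -?lt0n // expr1n.
by rewrite expr_le1 // cabs_ge0.
Qed.
End Main.
Section Cols.
Variable R : realType.
Local Notation C := (R[i]).

Lemma col_l1 n (B : 'M[C]_n) : (forall i, vnorm l1 (col i B) = 1) ->
  forall j, \sum_r cabs (B r j) = 1.
Proof. by move=> H j; rewrite -(H j) /=; apply: eq_bigr => r _; rewrite mxE. Qed.

Lemma col_l2 n (B : 'M[C]_n) : (forall i, vnorm l2 (col i B) = 1) ->
  forall j, \sum_r cabs (B r j) ^+ 2 = 1.
Proof.
move=> H j; have := H j; rewrite /= => E.
have <- : Num.sqrt (\sum_r cabs (col j B r 0) ^+ 2) ^+ 2 = 1 by rewrite E expr1n.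
by rewrite sqr_sqrtr ?sumr_ge0 // => [|r _]; [apply: eq_bigr => r _; rewrite mxE | rewrite exprn_ge0 // cabs_ge0].
Qed.

Lemma col_linf n (B : 'M[C]_n) : (forall i, vnorm linf (col i B) = 1) ->
  forall r j, cabs (B r j) <= 1.
Proof.
move=> H r j; rewrite -(H j) /=.
have -> : cabs (B r j) = cabs (col j B r 0) by rewrite mxE.
exact: (le_bigmax _ (fun l => cabs (col j B l 0))).
Qed.
End Cols.

Unset Implicit Arguments.

Theorem corollary2p13 (R : realType) (n k : nat) :
  (0 < k)%N -> (k <= n)%N ->
  (theta n k l1 l2 <= Num.sqrt (n%:R : R) ^+ k) /\
      (theta n k l1 linf <= (n%:R : R) ^+ k) /\
      (theta n k l2 l1 <= Num.sqrt ((n%:R : R) / k%:R) ^+ k) /\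
      (theta n k l2 linf <= Num.sqrt ((n%:R : R) / k%:R) ^+ k * Num.sqrt (n%:R : R) ^+ k) /\
      (theta n k linf l1 <=
        ((if (k < n)%N then 'C(n, k)%:R * Num.sqrt ((k.+1)%:R : R) ^+ k.-1
         else Num.sqrt (n%:R : R) ^+ n))) /\
    (theta n k linf l2 <=
        ((if (k < n)%N then 'C(n, k)%:R * Num.sqrt ((k.+1)%:R : R) ^+ k.-1
         else Num.sqrt (n%:R : R) ^+ n))).
Proof.
move=> k0 kn.
have n0 : (0 < n)%N by apply: leq_trans kn.
have bigC : ('C(n, k)%:R : R) <=
    (if (k < n)%N then 'C(n, k)%:R * Num.sqrt ((k.+1)%:R : R) ^+ k.-1
     else Num.sqrt (n%:R : R) ^+ n).
  case: ifP => knb.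
    apply: ler_peMr; first exact: ler0n.
    apply: exprn_ege1; rewrite -[leLHS]sqrtr1; apply: ler_wsqrtr; by rewrite ler1n.
  have -> : k = n by apply/eqP; rewrite eqn_leq kn leqNgt knb.
  rewrite binn; apply: exprn_ege1; rewrite -[leLHS]sqrtr1; apply: ler_wsqrtr; by rewrite ler1n.
have C0 : (0 : R) <= 'C(n, k)%:R by exact: ler0n.
split; [|split; [|split; [|split; [|split]]]].
- apply: theta_le; first by rewrite exprn_ge0 ?sqrtr_ge0.
  move=> B /col_l2 HB; apply: opnorm_le; first by rewrite exprn_ge0 ?sqrtr_ge0.
  move=> x; apply: vnorm_l1 => j; apply: le_trans (colsum_cp B j) _.
  rewrite -prod_const_ord; apply: ler_prod => t _; rewrite sumr_ge0 /=; last by move=> r _; exact: cabs_ge0.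
  have Hs := cs_lite (fun r => cabs (B r (ksub_idx (enum_val j) t))).
  rewrite HB mulr1 in Hs.
  rewrite -(ger0_norm (sumr_ge0 _ (fun r _ => cabs_ge0 (B r (ksub_idx (enum_val j) t))))).
  by rewrite -sqrtr_sqr; apply: ler_wsqrtr.
- apply: theta_le; first by rewrite exprn_ge0 ?ler0n.
  move=> B /col_linf HB; apply: opnorm_le; first by rewrite exprn_ge0 ?ler0n.
  move=> x; apply: vnorm_l1 => j; apply: le_trans (colsum_cp B j) _.
  rewrite -prod_const_ord; apply: ler_prod => t _; rewrite sumr_ge0 /=; last by move=> r _; exact: cabs_ge0.
  rewrite -[n in n%:R](card_ord n) -sumr_const; apply: ler_sum => r _; exact: HB.
- apply: theta_le; first by rewrite exprn_ge0 ?sqrtr_ge0.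
  move=> B /col_l1 HB; apply: opnorm_le; first by rewrite exprn_ge0 ?sqrtr_ge0.
  move=> x; rewrite -sqrtrX ?divr_ge0 ?ler0n //; apply: vnorm_l2 => //.
  rewrite -[n in n%:R](card_ord n) -sumr_const; apply: ler_sum => j _.
  by apply: sum_cabs_le1 => // r; exact: cabs_ge0.
- apply: theta_le; first by rewrite mulr_ge0 // exprn_ge0 ?sqrtr_ge0.
  move=> B /col_linf HB; apply: opnorm_le; first by rewrite mulr_ge0 // exprn_ge0 ?sqrtr_ge0.
  move=> x; rewrite -!sqrtrX ?divr_ge0 ?ler0n // -sqrtrM ?exprn_ge0 ?divr_ge0 ?ler0n //.
  rewrite -exprMn mulrAC.
  apply: vnorm_l2 => //.
  have -> : (n%:R * n%:R : R) = \sum_(j < n) (n%:R : R) by rewrite sumr_const card_ord mulr_natl.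
  apply: ler_sum => j _.
  have -> : (n%:R : R) = \sum_(r < n) (1 : R) by rewrite sumr_const card_ord.
  apply: ler_sum => r _.
  by rewrite expr_le1 // cabs_ge0.
- apply: theta_le; first exact: le_trans C0 bigC.
  move=> B /col_l1 HB; apply: opnorm_le; first exact: le_trans C0 bigC.
  move=> x; apply: le_trans (_ : _ <= 'C(n, k)%:R * vnorm linf x) _; last first.
    by apply: ler_wpM2r => //; apply: bigmax_ge0 => l; exact: cabs_ge0.
  apply: vnorm_linf => // i.
  have -> : ('C(n, k)%:R : R) = \sum_(j < #|{: ksub n k}|) (1 : R) by rewrite sumr_const card_ord card_ksub.
  apply: ler_sum => j _.
  apply: le_trans (entry_cp B i j) _.
  apply: le_trans (_ : _ <= \prod_(t < k) (1:R)) _; last by rewrite prod_const_ord expr1n.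
  by apply: eqle; apply: eq_bigr => t _; exact: HB.
- apply: theta_le; first exact: le_trans C0 bigC.
  move=> B /col_l2 HB; apply: opnorm_le; first exact: le_trans C0 bigC.
  move=> x; apply: le_trans (_ : _ <= 'C(n, k)%:R * vnorm linf x) _; last first.
    by apply: ler_wpM2r => //; apply: bigmax_ge0 => l; exact: cabs_ge0.
  apply: vnorm_linf => // i.
  have -> : ('C(n, k)%:R : R) = \sum_(j < #|{: ksub n k}|) (1 : R) by rewrite sumr_const card_ord card_ksub.
  apply: ler_sum => j _.
  exact: entry_cp_l2.
Qed.
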